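(* Let $0<\underline\theta\le\bar\theta<\infty$. There exists a constant $C>0$ depending only on $\nu,\underline\theta,\bar\theta$ such that for all $\delta\in(0,1]$, all $\theta\in[\underline\theta,\bar\theta]$ and all $\lambda\in[-\pi,\pi]$: $$C^{-1}\delta^{2\nu}\le g^*_{\nu,\delta\theta}(\lambda)\le g^\delta_{\nu,\theta}(\lambda)\le g^*_{\nu,\delta\theta}(\lambda)+C\delta^{2\nu},$$ and $$g^*_{\nu,\delta\theta}(\lambda)\,\big|h^\delta_{\nu,\theta}(\lambda)-\delta\,h^*_{\nu,\delta\theta}(\lambda)\big|\le C\delta^{2\nu}.$$
   Context: Fix $\nu\ge1/2$. For $\alpha>0$, $\omega\in\mathbb R$ let $g^*_{\nu,\alpha}(\omega)=C_\nu\alpha^{2\nu}(\alpha^2+\omega^2)^{-(\nu+1/2)}$ with $C_\nu=\Gamma(\nu+\frac12)/(\sqrt\pi\,\Gamma(\nu))$, and $h^*_{\nu,\alpha}=\partial\log g^*_{\nu,\alpha}/\partial\alpha$. For $\delta,\theta>0$ and $\lambda\in[-\pi,\pi]$ let $g^\delta_{\nu,\theta}(\lambda)=\sum_{k\in\mathbb Z}g^*_{\nu,\delta\theta}(\lambda+2k\pi)$ and $h^\delta_{\nu,\theta}=\partial\log g^\delta_{\nu,\theta}/\partial\theta$. *)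

(* Defs.v *)
From Stdlib Require Import Reals Lra ZArith ClassicalEpsilon.
Open Scope R_scope.

Fixpoint poch (x : R) (n : nat) : R :=
  match n with
  | O => x
  | S m => poch x m * (x + INR (S m))
  end.

(* Euler's Gamma function via Gauss' limit formula (valid for x > 0):
   Gamma x = lim_n n! n^x / (x (x+1) ... (x+n)). *)
Definition Gamma (x : R) : R :=
  epsilon (inhabits 0)
    (fun l => Un_cv (fun n => INR (fact n) * Rpower (INR n) x / poch x n) l).

Definition Cnu (nu : R) : R := Gamma (nu + /2) / (sqrt PI * Gamma nu).

Definition gstar (nu alpha omega : R) : R :=
  Cnu nu * Rpower alpha (2 * nu) * Rpower (alpha ^ 2 + omega ^ 2) (- (nu + /2)).

Definition hstar (nu alpha omega : R) : R :=
  epsilon (inhabits 0)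
    (fun l => derivable_pt_lim (fun a => ln (gstar nu a omega)) alpha l).

(* symmetric partial sums sum_{k=-N}^{N} g*_{nu,delta theta}(lambda + 2 k pi) *)
Definition gdelta_partial (nu delta theta lambda : R) (N : nat) : R :=
  sum_f_R0 (fun i => gstar nu (delta * theta)
              (lambda + 2 * IZR (Z.of_nat i - Z.of_nat N) * PI)) (2 * N).

(* g^delta_{nu,theta}(lambda) = sum_{k in Z} g*_{nu,delta theta}(lambda + 2 k pi)
   (series of positive terms, computed as limit of symmetric partial sums) *)
Definition gdelta (nu delta theta lambda : R) : R :=
  epsilon (inhabits 0) (fun l => Un_cv (gdelta_partial nu delta theta lambda) l).

Definition hdelta (nu delta theta lambda : R) : R :=
  epsilon (inhabits 0)
    (fun l => derivable_pt_lim (fun t => ln (gdelta nu delta t lambda)) theta l).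

(* Main.v *)
Require Import Defs.
From Stdlib Require Import Reals Lra Lia ClassicalEpsilon Arith ZArith.
Import Factorial.
Open Scope R_scope.

Lemma exp_le_mono x y : x <= y -> exp x <= exp y.
Proof. intros [H|H]; [left; now apply exp_increasing| subst; lra]. Qed.

Lemma ln_le_mono x y : 0 < x -> x <= y -> ln x <= ln y.
Proof. intros Hx [H|H]; [left; now apply ln_increasing| subst; lra]. Qed.

Lemma ln_le_sub1 x : 0 < x -> ln x <= x - 1.
Proof. intros Hx. pose proof (exp_ineq1_le (ln x)). rewrite exp_ln in H; lra. Qed.

Lemma cv_shift (u : nat -> R) l : Un_cv (fun n => u (S n)) l -> Un_cv u l.
Proof.
  intros H eps He. destruct (H eps He) as [N HN]. exists (S N). intros n Hn.
  destruct n as [|n]; [lia|]. apply HN. lia.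
Qed.

Definition ga (x : R) (n : nat) := INR (fact n) * Rpower (INR n) x / poch x n.

Lemma poch_pos x n : 0 < x -> 0 < poch x n.
Proof.
  intros Hx; induction n as [|n IH].
  - simpl; lra.
  - change (poch x (S n)) with (poch x n * (x + INR (S n))).
    apply Rmult_lt_0_compat; [lra|]. pose proof (pos_INR (S n)); lra.
Qed.

Definition gR (x : R) (n : nat) :=
  (INR (S n) / (x + INR (S n))) * exp (x * (ln (INR (S n)) - ln (INR n))).

Lemma ga_S x n : 0 < x -> ga x (S n) = ga x n * gR x n.
Proof.
  intros Hx. unfold ga, gR, Rpower.
  replace (x * ln (INR (S n))) with (x * ln (INR n) + x * (ln (INR (S n)) - ln (INR n))) by ring.
  rewrite exp_plus. change (fact (S n)) with (S n * fact n)%nat. rewrite mult_INR.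
  change (poch x (S n)) with (poch x n * (x + INR (S n))).
  pose proof (poch_pos x n Hx). pose proof (pos_INR (S n)).
  field. split; lra.
Qed.

Lemma gR_ge1 x n : 0 < x -> (1 <= n)%nat -> 1 <= gR x n.
Proof.
  intros Hx Hn. unfold gR.
  assert (Hn0 : 1 <= INR n) by (apply (le_INR 1); lia).
  rewrite S_INR.
  set (d := ln (INR n + 1) - ln (INR n)).
  assert (Hd : 1 / (INR n + 1) <= d).
  { unfold d. assert (ln (INR n / (INR n + 1)) <= INR n / (INR n + 1) - 1)
      by (apply ln_le_sub1; apply Rdiv_lt_0_compat; lra).
    unfold Rdiv in H. rewrite ln_mult, ln_Rinv in H; try lra.
    2: apply Rinv_0_lt_compat; lra.
    replace (INR n * / (INR n + 1) - 1) with (- (1 / (INR n + 1))) in H by (field; lra). lra. }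
  pose proof (exp_ineq1_le (x * d)).
  assert (x * (1 / (INR n + 1)) <= x * d) by (apply Rmult_le_compat_l; lra).
  apply Rle_trans with ((INR n + 1) / (x + (INR n + 1)) * (1 + x * (1 / (INR n + 1)))).
  - right. field. lra.
  - apply Rmult_le_compat_l; [|lra]. apply Rlt_le, Rdiv_lt_0_compat; lra.
Qed.

Lemma gR_le x n : 0 < x -> (1 <= n)%nat ->
  gR x n <= exp (x * (1 + x) * (1 / INR n - 1 / INR (S n))).
Proof.
  intros Hx Hn. unfold gR.
  assert (Hn0 : 1 <= INR n) by (apply (le_INR 1); lia).
  rewrite S_INR.
  assert (Hd : ln (INR n + 1) - ln (INR n) <= 1 / INR n).
  { assert (ln ((INR n + 1) / INR n) <= (INR n + 1) / INR n - 1)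
      by (apply ln_le_sub1; apply Rdiv_lt_0_compat; lra).
    unfold Rdiv in H. rewrite ln_mult, ln_Rinv in H; try lra.
    2: apply Rinv_0_lt_compat; lra.
    replace ((INR n + 1) * / INR n - 1) with (1 / INR n) in H by (field; lra). lra. }
  assert (H1 : (INR n + 1) / (x + (INR n + 1)) <= exp (- (x / (INR n + 1 + x)))).
  { pose proof (exp_ineq1_le (- (x / (INR n + 1 + x)))).
    replace ((INR n + 1) / (x + (INR n + 1))) with (1 + - (x / (INR n + 1 + x))) by (field; lra).
    lra. }
  apply Rle_trans with (exp (- (x / (INR n + 1 + x))) * exp (x * (1 / INR n))).
  - apply Rmult_le_compat; try lra.
    + apply Rlt_le, Rdiv_lt_0_compat; lra.
    + left; apply exp_pos.
    + apply exp_le_mono. apply Rmult_le_compat_l; lra.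
  - rewrite <- exp_plus. apply exp_le_mono.
    assert (x * (1 + x) * (1 / INR n - 1 / (INR n + 1)) -
            (- (x / (INR n + 1 + x)) + x * (1 / INR n)) =
            x * (1+x) * x / (INR n * (INR n + 1) * (INR n + 1 + x))) by (field; lra).
    assert (0 <= x * (1+x) * x / (INR n * (INR n + 1) * (INR n + 1 + x))).
    { apply Rlt_le, Rdiv_lt_0_compat. apply Rmult_lt_0_compat; [|lra]. apply Rmult_lt_0_compat; lra.
      apply Rmult_lt_0_compat; [apply Rmult_lt_0_compat|]; lra. }
    lra.
Qed.

Lemma ga_pos x n : 0 < x -> (1 <= n)%nat -> 0 < ga x n.
Proof.
  intros Hx Hn. unfold ga, Rpower. apply Rdiv_lt_0_compat.
  apply Rmult_lt_0_compat; [apply lt_0_INR, lt_O_fact | apply exp_pos].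
  now apply poch_pos.
Qed.

Lemma Gamma_pos x : 0 < x -> 0 < Gamma x.
Proof.
  intros Hx.
  set (b := fun n => ga x (S n)).
  assert (Hb : forall n, b (S n) = b n * gR x (S n)) by (intro n; unfold b; now rewrite ga_S).
  assert (Hbp : forall n, 0 < b n) by (intro n; apply ga_pos; [lra|lia]).
  assert (Hg : Un_growing b).
  { intro n. rewrite Hb. pose proof (gR_ge1 x (S n) Hx ltac:(lia)). pose proof (Hbp n).
    rewrite <- (Rmult_1_r (b n)) at 1. apply Rmult_le_compat_l; lra. }
  assert (Hub : forall n, b n <= b 0%nat * exp (x * (1 + x) * (1 - 1 / INR (S n)))).
  { induction n.
    - simpl. replace (1 - 1/1) with 0 by field. rewrite Rmult_0_r, exp_0. lra.
    - rewrite Hb. eapply Rle_trans.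
      + apply Rmult_le_compat; [left; apply Hbp | apply Rle_trans with 1; [lra|apply gR_ge1; [lra|lia]] | apply IHn | apply gR_le; [lra|lia]].
      + rewrite Rmult_assoc, <- exp_plus. right. f_equal. f_equal. ring.
  }
  assert (Hbd : has_ub b).
  { exists (b 0%nat * exp (x * (1 + x))). intros y [n ->].
    eapply Rle_trans; [apply Hub|]. apply Rmult_le_compat_l; [left; apply Hbp|].
    apply exp_le_mono. rewrite <- (Rmult_1_r (x * (1 + x))) at 2. apply Rmult_le_compat_l. pose proof (Rmult_lt_0_compat x (1+x) Hx ltac:(lra)); lra.
    assert (0 < 1 / INR (S n)) by (apply Rdiv_lt_0_compat; [lra| apply lt_0_INR; lia]). lra. }
  destruct (growing_cv b Hg Hbd) as [l Hl].
  assert (Hl' : Un_cv (fun n => INR (fact n) * Rpower (INR n) x / poch x n) l)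
    by (apply cv_shift; exact Hl).
  assert (HG : Gamma x = l).
  { unfold Gamma. apply (UL_sequence (fun n => INR (fact n) * Rpower (INR n) x / poch x n)); [|exact Hl'].
    apply epsilon_spec. exists l; exact Hl'. }
  rewrite HG. pose proof (growing_ineq b l Hg Hl 0). pose proof (Hbp 0%nat). lra.
Qed.

Lemma Cnu_pos nu : 0 < nu -> 0 < Cnu nu.
Proof.
  intros H. unfold Cnu. apply Rdiv_lt_0_compat. apply Gamma_pos; lra.
  apply Rmult_lt_0_compat. apply sqrt_lt_R0, PI_RGT_0. now apply Gamma_pos.
Qed.

Lemma dpl_ext f g x l : (forall t, f t = g t) -> derivable_pt_lim f x l -> derivable_pt_lim g x l.
Proof. intros E H eps He. destruct (H eps He) as [d Hd]. exists d. intros h H1 H2.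
  rewrite <- !E. now apply Hd. Qed.

Lemma dpl_plus f g x a b : derivable_pt_lim f x a -> derivable_pt_lim g x b ->
  derivable_pt_lim (fun t => f t + g t) x (a + b).
Proof. intros; now apply derivable_pt_lim_plus. Qed.
Lemma dpl_minus f g x a b : derivable_pt_lim f x a -> derivable_pt_lim g x b ->
  derivable_pt_lim (fun t => f t - g t) x (a - b).
Proof. intros; now apply derivable_pt_lim_minus. Qed.
Lemma dpl_mult f g x a b : derivable_pt_lim f x a -> derivable_pt_lim g x b ->
  derivable_pt_lim (fun t => f t * g t) x (a * g x + f x * b).
Proof. intros; now apply derivable_pt_lim_mult. Qed.
Lemma dpl_const c x : derivable_pt_lim (fun _ => c) x 0.
Proof. apply derivable_pt_lim_const. Qed.
Lemma dpl_id x : derivable_pt_lim (fun t => t) x 1.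
Proof. apply derivable_pt_lim_id. Qed.
Lemma dpl_scal c f x a : derivable_pt_lim f x a -> derivable_pt_lim (fun t => c * f t) x (c * a).
Proof. intros H. replace (c * a) with (0 * f x + c * a) by ring. apply dpl_mult; [apply dpl_const|exact H]. Qed.
Lemma dpl_ln f x a : 0 < f x -> derivable_pt_lim f x a ->
  derivable_pt_lim (fun t => ln (f t)) x (a / f x).
Proof. intros Hp H. replace (a / f x) with (/ f x * a) by (field; lra).
  apply (derivable_pt_lim_comp f ln x a (/ f x) H). now apply derivable_pt_lim_ln. Qed.
Lemma dpl_exp f x a : derivable_pt_lim f x a ->
  derivable_pt_lim (fun t => exp (f t)) x (exp (f x) * a).
Proof. intros H. apply (derivable_pt_lim_comp f exp x a (exp (f x)) H). apply derivable_pt_lim_exp. Qed.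
Lemma dpl_sq f x a : derivable_pt_lim f x a -> derivable_pt_lim (fun t => (f t)^2) x (2 * f x * a).
Proof. intros H. replace (2 * f x * a) with (INR 2 * f x ^ Init.Nat.pred 2 * a) by (simpl; ring).
  apply (derivable_pt_lim_comp f (fun y => y ^ 2) x a _ H). apply derivable_pt_lim_pow. Qed.

Definition Eg nu d w t := ln (Cnu nu) + 2 * nu * ln (d * t) - (nu + /2) * ln ((d * t) ^ 2 + w ^ 2).
Definition qf nu d w t := 2 * nu / t - (2 * nu + 1) * d * (d * t) / ((d * t) ^ 2 + w ^ 2).

Lemma gstar_exp nu a w : 0 < Cnu nu ->
  gstar nu a w = exp (ln (Cnu nu) + 2 * nu * ln a - (nu + /2) * ln (a ^ 2 + w ^ 2)).
Proof.
  intros Hc. unfold gstar, Rpower. unfold Rminus. rewrite !exp_plus, exp_ln by exact Hc.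
  repeat f_equal; ring.
Qed.

Lemma ln_gstar nu a w : 0 < Cnu nu ->
  ln (gstar nu a w) = ln (Cnu nu) + 2 * nu * ln a - (nu + /2) * ln (a ^ 2 + w ^ 2).
Proof. intros Hc. rewrite gstar_exp by exact Hc. apply ln_exp. Qed.

Lemma Eg_deriv nu d w t : 0 < d -> 0 < t -> derivable_pt_lim (Eg nu d w) t (qf nu d w t).
Proof.
  intros Hd Ht. unfold Eg.
  assert (Hdt : 0 < d * t) by (apply Rmult_lt_0_compat; lra).
  assert (Hz : 0 < (d * t) ^ 2 + w ^ 2) by (pose proof (pow2_ge_0 w); nra).
  assert (H1 : derivable_pt_lim (fun t => d * t) t (d * 1)) by (apply dpl_scal, dpl_id).
  assert (H2 := dpl_ln (fun t => d * t) t _ Hdt H1).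
  assert (H3 := dpl_sq _ _ _ H1).
  assert (H4 := dpl_plus _ _ t _ _ H3 (dpl_const (w ^ 2) t)).
  assert (H5 := dpl_ln (fun t => (d * t) ^ 2 + w ^ 2) t _ Hz H4).
  assert (H6 := dpl_minus (fun t => ln (Cnu nu) + 2 * nu * ln (d * t)) (fun t => (nu + /2) * ln ((d * t) ^ 2 + w ^ 2)) t _ _
     (dpl_plus (fun _ => ln (Cnu nu)) (fun t => 2 * nu * ln (d * t)) t _ _ (dpl_const (ln (Cnu nu)) t) (dpl_scal (2 * nu) (fun t => ln (d * t)) t _ H2))
     (dpl_scal (nu + /2) (fun t => ln ((d * t) ^ 2 + w ^ 2)) t _ H5)).
  replace (qf nu d w t) with (0 + 2 * nu * (d * 1 / (d * t)) - (nu + / 2) * ((2 * (d * t) * (d * 1) + 0) / ((d * t) ^ 2 + w ^ 2))) by (unfold qf; field; lra).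
  eapply dpl_ext; [|exact H6]. intro; reflexivity.
Qed.

Lemma Fk_deriv nu d w t : 0 < Cnu nu -> 0 < d -> 0 < t ->
  derivable_pt_lim (fun t => gstar nu (d * t) w) t (gstar nu (d * t) w * qf nu d w t).
Proof.
  intros Hc Hd Ht. pose proof (dpl_exp (Eg nu d w) t _ (Eg_deriv nu d w t Hd Ht)) as H.
  replace (gstar nu (d * t) w) with (exp (Eg nu d w t)) by (unfold Eg; rewrite gstar_exp by exact Hc; reflexivity).
  eapply dpl_ext; [|exact H]. intro s. unfold Eg. rewrite gstar_exp by exact Hc. reflexivity.
Qed.

Lemma hstar_val nu a w : 0 < Cnu nu -> 0 < a ->
  hstar nu a w = qf nu 1 w a.
Proof.
  intros Hc Ha. unfold hstar.
  assert (Hd : derivable_pt_lim (fun a => ln (gstar nu a w)) a (qf nu 1 w a)).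
  { eapply dpl_ext; [| apply (Eg_deriv nu 1 w a); lra].
    intro s. unfold Eg. rewrite ln_gstar by exact Hc. rewrite Rmult_1_l. reflexivity. }
  apply (uniqueness_limite (fun a => ln (gstar nu a w)) a); [|exact Hd].
  apply epsilon_spec. exists (qf nu 1 w a). exact Hd.
Qed.

Definition tel (j : nat) : R := match j with O => 0 | S _ => 1 / (INR j * INR (S j)) end.

Lemma tel_nonneg j : 0 <= tel j.
Proof. destruct j; unfold tel; [lra|]. apply Rlt_le, Rdiv_lt_0_compat; [lra|].
  apply Rmult_lt_0_compat; apply lt_0_INR; lia. Qed.

Lemma tel_diff n p : sum_f_R0 tel (n + p) - sum_f_R0 tel n = 1 / INR (S n) - 1 / INR (S (n + p)).
Proof.
  induction p.
  - rewrite Nat.add_0_r. ring.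
  - rewrite Nat.add_succ_r, tech5. unfold tel at 2.
    rewrite !S_INR in *. pose proof (pos_INR (n + p)).
    replace (sum_f_R0 tel (n + p) + 1 / ((INR (n + p) + 1) * (INR (n + p) + 1 + 1)) - sum_f_R0 tel n)
      with ((sum_f_R0 tel (n + p) - sum_f_R0 tel n) + 1 / ((INR (n + p) + 1) * (INR (n + p) + 1 + 1))) by ring.
    rewrite IHp. pose proof (pos_INR n). field. lra.
Qed.

Lemma tail_bound (u : nat -> R) K :
  (forall j, (1 <= j)%nat -> Rabs (u j) <= K * tel j) ->
  forall n p, Rabs (sum_f_R0 u (n + p) - sum_f_R0 u n) <= K * (1 / INR (S n) - 1 / INR (S (n + p))).
Proof.
  intros Hu n p. rewrite <- tel_diff. induction p.
  - rewrite Nat.add_0_r. unfold Rminus. rewrite !Rplus_opp_r, Rabs_R0. lra.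
  - rewrite Nat.add_succ_r, !tech5.
    replace (sum_f_R0 u (n + p) + u (S (n + p)) - sum_f_R0 u n) with
      ((sum_f_R0 u (n + p) - sum_f_R0 u n) + u (S (n + p))) by ring.
    eapply Rle_trans; [apply Rabs_triang|].
    pose proof (Hu (S (n + p)) ltac:(lia)). nra.
Qed.

Lemma small_inv K eps : 0 < eps -> exists N, forall n, (N <= n)%nat -> K * (1 / INR (S n)) < eps.
Proof.
  intros He. destruct (archimed_cor1 (eps / (Rabs K + 1))) as [N [HN HN0]].
  { apply Rdiv_lt_0_compat; [lra|]. pose proof (Rabs_pos K); lra. }
  exists N. intros n Hn.
  assert (HNR : 0 < INR N) by (apply lt_0_INR; lia).
  assert (INR N <= INR (S n)) by (apply le_INR; lia).
  assert (HK : K <= Rabs K) by apply RRle_abs.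
  pose proof (Rabs_pos K).
  assert (Hi : 0 < / INR (S n)) by (apply Rinv_0_lt_compat; lra).
  assert (/ INR (S n) <= / INR N) by (apply Rinv_le_contravar; lra).
  apply Rle_lt_trans with ((Rabs K + 1) * / INR N).
  - unfold Rdiv. rewrite Rmult_1_l. apply Rle_trans with (Rabs K * / INR (S n)).
    + apply Rmult_le_compat_r; lra.
    + apply Rmult_le_compat; lra.
  - apply Rmult_lt_reg_l with (/ (Rabs K + 1)). apply Rinv_0_lt_compat; lra.
    rewrite <- Rmult_assoc, Rinv_l, Rmult_1_l by lra. unfold Rdiv in HN. lra.
Qed.

Lemma tail_bound' (u : nat -> R) K : 0 <= K ->
  (forall j, (1 <= j)%nat -> Rabs (u j) <= K * tel j) ->
  forall n m, (n <= m)%nat -> Rabs (sum_f_R0 u m - sum_f_R0 u n) <= K * (1 / INR (S n)).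
Proof.
  intros HK Hu n m Hnm. replace m with (n + (m - n))%nat by lia.
  eapply Rle_trans; [apply tail_bound; exact Hu|].
  apply Rmult_le_compat_l; [lra|].
  assert (0 < 1 / INR (S (n + (m - n)))) by (apply Rdiv_lt_0_compat; [lra| apply lt_0_INR; lia]). lra.
Qed.

Lemma series_cv (u : nat -> R) K : 0 <= K ->
  (forall j, (1 <= j)%nat -> Rabs (u j) <= K * tel j) ->
  exists l, Un_cv (fun n => sum_f_R0 u n) l.
Proof.
  intros HK Hu.
  assert (Hc : Cauchy_crit (fun n => sum_f_R0 u n)).
  { intros eps He. destruct (small_inv K eps He) as [N HN]. exists N. intros n m Hn Hm.
    unfold Rdist. destruct (Nat.le_ge_cases n m) as [H|H].
    - rewrite Rabs_minus_sym. eapply Rle_lt_trans; [apply (tail_bound' u K HK Hu n m H)|]. apply HN; lia.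
    - eapply Rle_lt_trans; [apply (tail_bound' u K HK Hu m n H)|]. apply HN; lia. }
  destruct (R_complete _ Hc) as [l Hl]. now exists l.
Qed.

Lemma cvu_tel (fn : nat -> R -> R) (g : R -> R) c (r : posreal) K : 0 <= K ->
  (forall j y, (1 <= j)%nat -> Boule c r y -> Rabs (fn j y) <= K * tel j) ->
  (forall y, Boule c r y -> Un_cv (fun N => sum_f_R0 (fun k => fn k y) N) (g y)) ->
  CVU (fun N y => sum_f_R0 (fun k => fn k y) N) g c r.
Proof.
  intros HK Hb Hcv eps He.
  destruct (small_inv K (eps / 2) ltac:(lra)) as [N HN]. exists N. intros n y Hn Hy.
  destruct (Hcv y Hy (eps / 2) ltac:(lra)) as [M HM].
  set (m := Nat.max n M).
  assert (H1 := HM m ltac:(unfold m; lia)). unfold Rdist in H1.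
  assert (H2 := tail_bound' (fun k => fn k y) K HK (fun j Hj => Hb j y Hj Hy) n m ltac:(unfold m; lia)).
  assert (H3 := HN n Hn).
  replace (g y - sum_f_R0 (fun k => fn k y) n) with
    ((sum_f_R0 (fun k => fn k y) m - sum_f_R0 (fun k => fn k y) n) - (sum_f_R0 (fun k => fn k y) m - g y)) by ring.
  eapply Rle_lt_trans; [apply Rabs_triang|]. rewrite Rabs_Ropp. lra.
Qed.

Lemma abs_bnd x B : Rabs x <= B -> - B <= x <= B.
Proof. intros H. pose proof (Rle_abs x). pose proof (Rle_abs (- x)). rewrite Rabs_Ropp in H1. lra. Qed.

Lemma lim_le (u : nat -> R) l B : Un_cv u l -> (forall n, u n <= B) -> l <= B.
Proof.
  intros H Hb. destruct (Rle_lt_dec l B) as [|Hlt]; [assumption|].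
  destruct (H (l - B) ltac:(lra)) as [N HN]. specialize (HN N (le_n N)). specialize (Hb N).
  unfold Rdist in HN. apply Rabs_def2 in HN. lra.
Qed.

Lemma lim_ge (u : nat -> R) l B : Un_cv u l -> (forall n, B <= u n) -> B <= l.
Proof.
  intros H Hb. destruct (Rle_lt_dec B l) as [|Hlt]; [assumption|].
  destruct (H (B - l) ltac:(lra)) as [N HN]. specialize (HN N (le_n N)). specialize (Hb N).
  unfold Rdist in HN. apply Rabs_def2 in HN. lra.
Qed.

Lemma lim_abs_le (u : nat -> R) l B : Un_cv u l -> (forall n, Rabs (u n) <= B) -> Rabs l <= B.
Proof.
  intros H Hb. apply Rabs_le. split.
  - apply (lim_ge u); auto. intro n. specialize (Hb n). apply abs_bnd in Hb; lra.
  - apply (lim_le u); auto. intro n. specialize (Hb n). apply abs_bnd in Hb; lra.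
Qed.

Definition lim (u : nat -> R) : R := epsilon (inhabits 0) (fun l => Un_cv u l).
Lemma lim_spec u : (exists l, Un_cv u l) -> Un_cv u (lim u).
Proof. intros H. unfold lim. now apply epsilon_spec. Qed.

Lemma sum_tel_abs (u : nat -> R) K n : 0 <= K -> (forall j, Rabs (u j) <= K * tel j) ->
  Rabs (sum_f_R0 u n) <= K.
Proof.
  intros HK Hu. eapply Rle_trans; [apply sum_f_R0_triangle|].
  eapply Rle_trans; [apply (sum_Rle _ (fun j => tel j * K)); intros; rewrite Rmult_comm; apply Hu|].
  rewrite <- scal_sum. pose proof (tel_diff 0 n). simpl (0 + n)%nat in H.
  simpl (sum_f_R0 tel 0) in H.
  assert (0 < 1 / INR (S n)) by (apply Rdiv_lt_0_compat; [lra|apply lt_0_INR; lia]).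
  replace (INR 1) with 1 in H by reflexivity.
  assert (sum_f_R0 tel n <= 1) by lra. rewrite <- (Rmult_1_r K) at 2. apply Rmult_le_compat_l; lra.
Qed.

Lemma sum_deriv (h h' : nat -> R -> R) x n :
  (forall k, derivable_pt_lim (h k) x (h' k x)) ->
  derivable_pt_lim (fun t => sum_f_R0 (fun k => h k t) n) x (sum_f_R0 (fun k => h' k x) n).
Proof.
  intros H. induction n; simpl.
  - apply H.
  - apply (derivable_pt_lim_plus (fun t => sum_f_R0 (fun k => h k t) n) (h (S n))); auto.
Qed.

Definition omg lam (k : Z) := lam + 2 * IZR k * PI.
Definition Fk nu d lam k t := gstar nu (d * t) (omg lam k).
Definition Pj nu d lam (j : nat) t := match j with
  | O => Fk nu d lam 0%Z t
  | S m => Fk nu d lam (Z.of_nat (S m)) t + Fk nu d lam (- Z.of_nat (S m))%Z t end.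
Definition Dj nu d lam (j : nat) t := match j with
  | O => Fk nu d lam 0%Z t * qf nu d (omg lam 0) t
  | S m => Fk nu d lam (Z.of_nat (S m)) t * qf nu d (omg lam (Z.of_nat (S m))) t
         + Fk nu d lam (- Z.of_nat (S m))%Z t * qf nu d (omg lam (- Z.of_nat (S m))%Z) t end.

Lemma reindex (G : Z -> R) N :
  sum_f_R0 (fun i => G (Z.of_nat i - Z.of_nat N)%Z) (2 * N) =
  sum_f_R0 (fun j => match j with O => G 0%Z | S m => G (Z.of_nat (S m)) + G (- Z.of_nat (S m))%Z end) N.
Proof.
  induction N.
  - simpl. reflexivity.
  - replace (2 * S N)%nat with (S (S (2 * N))) by lia.
    rewrite decomp_sum by lia. change (Init.Nat.pred (S (S (2 * N)))) with (S (2 * N)). rewrite tech5.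
    rewrite tech5. rewrite <- IHN.
    replace (sum_f_R0 (fun i => G (Z.of_nat (S i) - Z.of_nat (S N))%Z) (2 * N))
      with (sum_f_R0 (fun i => G (Z.of_nat i - Z.of_nat N)%Z) (2 * N))
      by (apply sum_eq; intros; f_equal; lia).
    replace (Z.of_nat 0 - Z.of_nat (S N))%Z with (- Z.of_nat (S N))%Z by lia.
    replace (Z.of_nat (S (S (2 * N))) - Z.of_nat (S N))%Z with (Z.of_nat (S N)) by lia.
    ring.
Qed.

Lemma gdp_eq nu d t lam N :
  gdelta_partial nu d t lam N = sum_f_R0 (fun j => Pj nu d lam j t) N.
Proof. unfold gdelta_partial. exact (reindex (fun k => Fk nu d lam k t) N). Qed.

Lemma gstar_pos nu a w : 0 < Cnu nu -> 0 < gstar nu a w.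
Proof. intros Hc. rewrite gstar_exp by exact Hc. apply exp_pos. Qed.

Lemma gstar_tail nu a w : /2 <= nu -> 0 < Cnu nu -> 1 <= w ^ 2 ->
  gstar nu a w <= Cnu nu * Rpower a (2 * nu) / w ^ 2.
Proof.
  intros Hn Hc Hw. unfold gstar. unfold Rdiv. rewrite Rmult_assoc. rewrite (Rmult_assoc (Cnu nu)).
  apply Rmult_le_compat_l; [lra|]. apply Rmult_le_compat_l; [unfold Rpower; left; apply exp_pos|].
  unfold Rpower. rewrite <- (exp_ln (w ^ 2)) at 2 by lra. rewrite <- exp_Ropp. apply exp_le_mono.
  assert (H0 : 0 <= ln (w ^ 2)) by (rewrite <- ln_1; apply ln_le_mono; lra).
  assert (H1 : ln (w ^ 2) <= ln (a ^ 2 + w ^ 2)) by (apply ln_le_mono; [lra| pose proof (pow2_ge_0 a); lra]).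
  nra.
Qed.

Lemma PI_gt2 : 2 < PI.
Proof. pose proof PI2_1. lra. Qed.

Lemma omg_sq lam k J : - PI <= lam <= PI -> 1 <= J -> (IZR k = J \/ IZR k = - J) ->
  2 * J * (J + 1) <= (omg lam k) ^ 2.
Proof.
  intros Hl HJ Hk. unfold omg. pose proof PI_gt2.
  assert (Ha : 2 * J <= Rabs (lam + 2 * IZR k * PI)).
  { destruct Hk as [-> | ->].
    - rewrite Rabs_right; nra.
    - rewrite Rabs_left1; nra. }
  rewrite <- pow2_abs. simpl.
  assert (4 * J * J <= Rabs (lam + 2 * IZR k * PI) * Rabs (lam + 2 * IZR k * PI)).
  { replace (4 * J * J) with ((2 * J) * (2 * J)) by ring. apply Rmult_le_compat; lra. }
  nra.
Qed.

Lemma Fk_tail nu d lam t k J : /2 <= nu -> 0 < Cnu nu -> - PI <= lam <= PI -> 1 <= J ->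
  (IZR k = J \/ IZR k = - J) ->
  Fk nu d lam k t <= Cnu nu * Rpower (d * t) (2 * nu) / (2 * J * (J + 1)).
Proof.
  intros Hn Hc Hl HJ Hk. pose proof (omg_sq lam k J Hl HJ Hk).
  unfold Fk. eapply Rle_trans; [apply gstar_tail; auto; nra|].
  unfold Rdiv. apply Rmult_le_compat_l.
  - apply Rmult_le_pos; [lra| unfold Rpower; left; apply exp_pos].
  - apply Rinv_le_contravar; nra.
Qed.

Lemma IZR_S m : IZR (Z.of_nat (S m)) = INR (S m).
Proof. now rewrite <- INR_IZR_INZ. Qed.
Lemma IZR_mS m : IZR (- Z.of_nat (S m)) = - INR (S m).
Proof. now rewrite opp_IZR, <- INR_IZR_INZ. Qed.

Lemma Pj_nonneg nu d lam j t : 0 < Cnu nu -> 0 <= Pj nu d lam j t.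
Proof.
  intros Hc. destruct j; unfold Pj, Fk.
  - left; now apply gstar_pos.
  - pose proof (gstar_pos nu (d * t) (omg lam (Z.of_nat (S j))) Hc).
    pose proof (gstar_pos nu (d * t) (omg lam (- Z.of_nat (S j))) Hc). lra.
Qed.

Lemma Pj_bound nu d lam j t : /2 <= nu -> 0 < Cnu nu -> - PI <= lam <= PI -> (1 <= j)%nat ->
  Pj nu d lam j t <= Cnu nu * Rpower (d * t) (2 * nu) * tel j.
Proof.
  intros Hn Hc Hl Hj. destruct j as [|m]; [lia|]. unfold Pj, tel.
  assert (HJ : 1 <= INR (S m)) by (apply (le_INR 1); lia).
  pose proof (Fk_tail nu d lam t (Z.of_nat (S m)) (INR (S m)) Hn Hc Hl HJ (or_introl (IZR_S m))).
  pose proof (Fk_tail nu d lam t (- Z.of_nat (S m))%Z (INR (S m)) Hn Hc Hl HJ (or_intror (IZR_mS m))).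
  rewrite (S_INR (S m)).
  replace (Cnu nu * Rpower (d * t) (2 * nu) * (1 / (INR (S m) * (INR (S m) + 1))))
    with (Cnu nu * Rpower (d * t) (2 * nu) / (2 * INR (S m) * (INR (S m) + 1)) +
          Cnu nu * Rpower (d * t) (2 * nu) / (2 * INR (S m) * (INR (S m) + 1))) by (field; lra).
  lra.
Qed.

Lemma Pj_abs nu d lam j t : /2 <= nu -> 0 < Cnu nu -> - PI <= lam <= PI -> (1 <= j)%nat ->
  Rabs (Pj nu d lam j t) <= Cnu nu * Rpower (d * t) (2 * nu) * tel j.
Proof.
  intros. rewrite Rabs_right by (apply Rle_ge, Pj_nonneg; auto). now apply Pj_bound.
Qed.

Lemma X_bounds nu d w t : 0 <= nu -> 0 < d -> 0 < t ->
  0 <= (2 * nu + 1) * d * (d * t) / ((d * t) ^ 2 + w ^ 2) <= (2 * nu + 1) / t.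
Proof.
  intros Hn Hd Ht. assert (Hdt : 0 < d * t) by (apply Rmult_lt_0_compat; lra).
  assert (Hz : (d * t) ^ 2 <= (d * t) ^ 2 + w ^ 2) by (pose proof (pow2_ge_0 w); lra).
  assert (Hz0 : 0 < (d * t) ^ 2) by (apply pow_lt; lra).
  split.
  - apply Rlt_le, Rdiv_lt_0_compat; [|lra]. repeat apply Rmult_lt_0_compat; lra.
  - apply Rle_trans with ((2 * nu + 1) * d * (d * t) / ((d * t) ^ 2)).
    + unfold Rdiv. apply Rmult_le_compat_l. apply Rlt_le; repeat apply Rmult_lt_0_compat; lra.
      apply Rinv_le_contravar; lra.
    + right. field. lra.
Qed.

Lemma qf_abs nu d w t : 0 <= nu -> 0 < d -> 0 < t -> Rabs (qf nu d w t) <= (4 * nu + 1) / t.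
Proof.
  intros Hn Hd Ht. pose proof (X_bounds nu d w t Hn Hd Ht). unfold qf.
  assert (0 <= 2 * nu / t) by (apply Rmult_le_pos; [lra| left; apply Rinv_0_lt_compat; lra]).
  replace ((4 * nu + 1) / t) with (2 * nu / t + (2 * nu + 1) / t) by (field; lra).
  apply Rabs_le. lra.
Qed.

Lemma qf_diff nu d w1 w2 t : 0 <= nu -> 0 < d -> 0 < t ->
  Rabs (qf nu d w1 t - qf nu d w2 t) <= (2 * nu + 1) / t.
Proof.
  intros Hn Hd Ht. pose proof (X_bounds nu d w1 t Hn Hd Ht). pose proof (X_bounds nu d w2 t Hn Hd Ht).
  unfold qf. apply Rabs_le. lra.
Qed.

Lemma Dj_bound nu d lam j t : /2 <= nu -> 0 < Cnu nu -> - PI <= lam <= PI -> 0 < d -> 0 < t -> (1 <= j)%nat ->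
  Rabs (Dj nu d lam j t) <= ((4 * nu + 1) / t) * (Cnu nu * Rpower (d * t) (2 * nu)) * tel j.
Proof.
  intros Hn Hc Hl Hd Ht Hj. rewrite Rmult_assoc. eapply Rle_trans; [|apply Rmult_le_compat_l; [|apply (Pj_bound nu d lam j t); auto]].
  2: apply Rlt_le, Rdiv_lt_0_compat; lra.
  destruct j as [|m]; [lia|]. unfold Dj, Pj.
  set (F1 := Fk nu d lam (Z.of_nat (S m)) t). set (F2 := Fk nu d lam (- Z.of_nat (S m))%Z t).
  assert (0 < F1) by (apply gstar_pos; auto). assert (0 < F2) by (apply gstar_pos; auto).
  pose proof (qf_abs nu d (omg lam (Z.of_nat (S m))) t ltac:(lra) Hd Ht).
  pose proof (qf_abs nu d (omg lam (- Z.of_nat (S m))) t ltac:(lra) Hd Ht).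
  eapply Rle_trans; [apply Rabs_triang|]. rewrite !Rabs_mult, (Rabs_right F1), (Rabs_right F2) by lra.
  nra.
Qed.

Lemma DPj_bound nu d lam j t : /2 <= nu -> 0 < Cnu nu -> - PI <= lam <= PI -> 0 < d -> 0 < t ->
  Rabs (Dj nu d lam j t - qf nu d (omg lam 0) t * Pj nu d lam j t)
    <= ((2 * nu + 1) / t) * (Cnu nu * Rpower (d * t) (2 * nu)) * tel j.
Proof.
  intros Hn Hc Hl Hd Ht. destruct j as [|m].
  - unfold Dj, Pj, tel. rewrite Rmult_0_r. right.
    replace (Fk nu d lam 0 t * qf nu d (omg lam 0) t - qf nu d (omg lam 0) t * Fk nu d lam 0 t) with 0 by ring.
    apply Rabs_R0.
  - rewrite Rmult_assoc. eapply Rle_trans; [|apply Rmult_le_compat_l; [|apply (Pj_bound nu d lam (S m) t); auto; lia]].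
    2: apply Rlt_le, Rdiv_lt_0_compat; lra.
    unfold Dj, Pj.
    set (F1 := Fk nu d lam (Z.of_nat (S m)) t). set (F2 := Fk nu d lam (- Z.of_nat (S m))%Z t).
    assert (0 < F1) by (apply gstar_pos; auto). assert (0 < F2) by (apply gstar_pos; auto).
    pose proof (qf_diff nu d (omg lam (Z.of_nat (S m))) (omg lam 0) t ltac:(lra) Hd Ht).
    pose proof (qf_diff nu d (omg lam (- Z.of_nat (S m))) (omg lam 0) t ltac:(lra) Hd Ht).
    replace (F1 * qf nu d (omg lam (Z.of_nat (S m))) t + F2 * qf nu d (omg lam (- Z.of_nat (S m))) t -
             qf nu d (omg lam 0) t * (F1 + F2))
      with (F1 * (qf nu d (omg lam (Z.of_nat (S m))) t - qf nu d (omg lam 0) t) +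
            F2 * (qf nu d (omg lam (- Z.of_nat (S m))) t - qf nu d (omg lam 0) t)) by ring.
    eapply Rle_trans; [apply Rabs_triang|]. rewrite !Rabs_mult, (Rabs_right F1), (Rabs_right F2) by lra.
    nra.
Qed.

Lemma Pj_deriv nu d lam j t : 0 < Cnu nu -> 0 < d -> 0 < t ->
  derivable_pt_lim (Pj nu d lam j) t (Dj nu d lam j t).
Proof.
  intros Hc Hd Ht. destruct j as [|m]; unfold Pj, Dj, Fk.
  - apply Fk_deriv; auto.
  - apply (derivable_pt_lim_plus (fun t => gstar nu (d * t) (omg lam (Z.of_nat (S m))))
                                 (fun t => gstar nu (d * t) (omg lam (- Z.of_nat (S m))))); apply Fk_deriv; auto.
Qed.

Lemma Un_cv_ext u v l : (forall n, u n = v n) -> Un_cv u l -> Un_cv v l.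
Proof. intros E H eps He. destruct (H eps He) as [N HN]. exists N. intros n Hn. rewrite <- E. now apply HN. Qed.

Lemma omg0 lam : omg lam 0 = lam.
Proof. unfold omg. simpl. ring. Qed.

Lemma Rpower_pos a p : 0 < Rpower a p.
Proof. unfold Rpower. apply exp_pos. Qed.

Lemma T_cv nu d lam t : /2 <= nu -> 0 < Cnu nu -> - PI <= lam <= PI ->
  Un_cv (fun N => sum_f_R0 (fun j => Pj nu d lam j t) N) (gdelta nu d t lam).
Proof.
  intros Hn Hc Hl.
  destruct (series_cv (fun j => Pj nu d lam j t) (Cnu nu * Rpower (d * t) (2 * nu)))
    as [l Hlim].
  { apply Rmult_le_pos; [lra| left; apply Rpower_pos]. }
  { intros j Hj. apply Pj_abs; auto. }
  apply (Un_cv_ext (gdelta_partial nu d t lam)); [intro; apply gdp_eq|].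
  unfold gdelta. apply epsilon_spec. exists l.
  apply (Un_cv_ext (fun N => sum_f_R0 (fun j => Pj nu d lam j t) N)); [intro; symmetry; apply gdp_eq| exact Hlim].
Qed.

Lemma T_ge0 nu d lam t n : 0 < Cnu nu ->
  Pj nu d lam 0 t <= sum_f_R0 (fun j => Pj nu d lam j t) n.
Proof.
  intros Hc. induction n; [simpl; lra|]. rewrite tech5. pose proof (Pj_nonneg nu d lam (S n) t Hc). lra.
Qed.

Lemma T_le nu d lam t n : /2 <= nu -> 0 < Cnu nu -> - PI <= lam <= PI ->
  sum_f_R0 (fun j => Pj nu d lam j t) n <= Pj nu d lam 0 t + Cnu nu * Rpower (d * t) (2 * nu).
Proof.
  intros Hn Hc Hl.
  pose proof (tail_bound' (fun j => Pj nu d lam j t) (Cnu nu * Rpower (d * t) (2 * nu))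
     ltac:(apply Rmult_le_pos; [lra| left; apply Rpower_pos]) ltac:(intros j Hj; apply Pj_abs; auto) 0 n ltac:(lia)).
  simpl sum_f_R0 at 2 in H. replace (1 / INR 1) with 1 in H by (simpl; field).
  apply abs_bnd in H. change (Pj nu d lam 0 t) with (Fk nu d lam 0 t). lra.
Qed.

Section Main.
End Main.

Lemma key nu d lam t : /2 <= nu -> 0 < Cnu nu -> - PI <= lam <= PI -> 0 < d -> 0 < t ->
  let F0 := gstar nu (d * t) lam in
  let K := Cnu nu * Rpower (d * t) (2 * nu) in
  F0 <= gdelta nu d t lam /\ gdelta nu d t lam <= F0 + K /\
  F0 * Rabs (hdelta nu d t lam - d * hstar nu (d * t) lam) <= (2 * nu + 1) / t * K.
Proof.
  intros Hn Hc Hl Hd Ht F0 K.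
  assert (HP0 : Pj nu d lam 0 t = F0) by (unfold Pj, Fk, F0; now rewrite omg0).
  assert (HK : 0 <= K) by (apply Rmult_le_pos; [lra| left; apply Rpower_pos]).
  assert (HF0 : 0 < F0) by (apply gstar_pos; auto).
  pose proof (T_cv nu d lam t Hn Hc Hl) as Tcv.
  assert (HG1 : F0 <= gdelta nu d t lam).
  { apply (lim_ge _ _ _ Tcv). intro n. rewrite <- HP0. apply T_ge0; auto. }
  assert (HG2 : gdelta nu d t lam <= F0 + K).
  { apply (lim_le _ _ _ Tcv). intro n. rewrite <- HP0. apply T_le; auto. }
  split; [exact HG1|]. split; [exact HG2|].
  assert (Hr : 0 < t / 2) by lra.
  set (r := mkposreal (t / 2) Hr).
  assert (Hball : forall y, Boule t r y -> t / 2 < y < 3 * t / 2).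
  { intros y Hy. unfold Boule in Hy. simpl in Hy. apply Rabs_def2 in Hy. lra. }
  set (K' := (4 * nu + 1) * (2 / t) * (Cnu nu * Rpower (d * (2 * t)) (2 * nu))).
  assert (HK' : 0 <= K').
  { unfold K'. apply Rmult_le_pos; [apply Rmult_le_pos; [lra| apply Rlt_le, Rdiv_lt_0_compat; lra]|].
    apply Rmult_le_pos; [lra| left; apply Rpower_pos]. }
  assert (HDb : forall j y, (1 <= j)%nat -> Boule t r y -> Rabs (Dj nu d lam j y) <= K' * tel j).
  { intros j y Hj Hy. pose proof (Hball y Hy) as [Hy1 Hy2].
    eapply Rle_trans; [apply Dj_bound; auto; lra|].
    apply Rmult_le_compat_r; [apply tel_nonneg|]. unfold K'.
    apply Rmult_le_compat.
    - apply Rlt_le, Rdiv_lt_0_compat; lra.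
    - apply Rmult_le_pos; [lra| left; apply Rpower_pos].
    - unfold Rdiv. apply Rmult_le_compat_l; [lra|].
      replace (2 * / t) with (/ (t / 2)) by (field; lra).
      apply Rinv_le_contravar; lra.
    - apply Rmult_le_compat_l; [lra|]. apply Rle_Rpower_l; [lra|].
      split; [apply Rmult_lt_0_compat; lra| apply Rmult_le_compat_l; lra]. }
  set (g' := fun y => lim (fun N => sum_f_R0 (fun j => Dj nu d lam j y) N)).
  assert (Hg'cv : forall y, Boule t r y -> Un_cv (fun N => sum_f_R0 (fun j => Dj nu d lam j y) N) (g' y)).
  { intros y Hy. apply lim_spec. apply (series_cv _ K' HK'). intros j Hj. now apply HDb. }
  assert (Hcvu : CVU (fun N y => sum_f_R0 (fun j => Dj nu d lam j y) N) g' t r).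
  { apply (cvu_tel (fun j y => Dj nu d lam j y) g' t r K' HK'); auto. }
  assert (Hder : derivable_pt_lim (fun y => gdelta nu d y lam) t (g' t)).
  { apply (CVU_derivable (fun N y => sum_f_R0 (fun j => Pj nu d lam j y) N)
             (fun N y => sum_f_R0 (fun j => Dj nu d lam j y) N)
             (fun y => gdelta nu d y lam) g' t r Hcvu).
    - intros x Hx. apply T_cv; auto.
    - intros n x Hx. pose proof (Hball x Hx). apply (sum_deriv (fun k => Pj nu d lam k) (fun k => Dj nu d lam k)).
      intro k. apply Pj_deriv; auto; lra.
    - unfold Boule. rewrite Rminus_diag, Rabs_R0. simpl; lra. }
  assert (HGpos : 0 < gdelta nu d t lam) by lra.
  pose proof (dpl_ln (fun y => gdelta nu d y lam) t _ HGpos Hder) as Hlnd.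
  assert (Hh : hdelta nu d t lam = g' t / gdelta nu d t lam).
  { unfold hdelta. apply (uniqueness_limite (fun y => ln (gdelta nu d y lam)) t); [|exact Hlnd].
    apply epsilon_spec. eexists; exact Hlnd. }
  assert (Hdt : 0 < d * t) by (apply Rmult_lt_0_compat; lra).
  assert (Hhs : d * hstar nu (d * t) lam = qf nu d lam t).
  { rewrite hstar_val by auto. unfold qf.
    assert (0 < (1 * (d * t)) ^ 2 + lam ^ 2) by (pose proof (pow2_ge_0 lam); rewrite Rmult_1_l; nra).
    assert (0 < (d * t) ^ 2 + lam ^ 2) by (pose proof (pow2_ge_0 lam); nra).
    field. repeat split; lra. }
  rewrite Hh, Hhs.
  set (G := gdelta nu d t lam). set (q0 := qf nu d lam t).
  assert (Hlimd : Un_cv (fun N => sum_f_R0 (fun j => Dj nu d lam j t - qf nu d (omg lam 0) t * Pj nu d lam j t) N) (g' t - q0 * G)).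
  { apply (Un_cv_ext (fun N => sum_f_R0 (fun j => Dj nu d lam j t) N - q0 * sum_f_R0 (fun j => Pj nu d lam j t) N)).
    - intro n. rewrite minus_sum, scal_sum. unfold q0. rewrite omg0. f_equal. apply sum_eq. intros; ring.
    - apply CV_minus; [apply Hg'cv; unfold Boule; rewrite Rminus_diag, Rabs_R0; simpl; lra|].
      apply CV_mult; [intros eps He; exists 0%nat; intros; unfold Rdist; rewrite Rminus_diag, Rabs_R0; lra| exact Tcv]. }
  assert (Hb : Rabs (g' t - q0 * G) <= (2 * nu + 1) / t * K).
  { apply (lim_abs_le _ _ _ Hlimd). intro n. apply sum_tel_abs.
    - apply Rmult_le_pos; [apply Rlt_le, Rdiv_lt_0_compat; lra| exact HK].
    - intro j. apply DPj_bound; auto. }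
  replace (g' t / G - q0) with ((g' t - q0 * G) / G) by (field; unfold G; lra).
  unfold Rdiv. rewrite Rabs_mult, Rabs_inv by (unfold G; lra). rewrite (Rabs_right G) by (unfold G; lra).
  apply Rle_trans with (Rabs (g' t - q0 * G)); [|exact Hb].
  rewrite (Rmult_comm (Rabs _)), <- Rmult_assoc.
  rewrite <- (Rmult_1_l (Rabs (g' t - q0 * G))) at 2. apply Rmult_le_compat_r; [apply Rabs_pos|].
  apply Rmult_le_reg_r with G; [unfold G; lra|]. rewrite Rmult_assoc, Rinv_l by (unfold G; lra). unfold G. lra.
Qed.

Theorem lemma5p1 (nu thl thu : R) (Hnu : /2 <= nu)
  (Hthl : 0 < thl) (Hth : thl <= thu) :
  exists C : R, 0 < C /\
    forall delta theta lambda : R,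
      0 < delta -> delta <= 1 ->
      thl <= theta -> theta <= thu ->
      - PI <= lambda -> lambda <= PI ->
      / C * Rpower delta (2 * nu) <= gstar nu (delta * theta) lambda /\
      gstar nu (delta * theta) lambda <= gdelta nu delta theta lambda /\
      gdelta nu delta theta lambda
        <= gstar nu (delta * theta) lambda + C * Rpower delta (2 * nu) /\
      gstar nu (delta * theta) lambda
        * Rabs (hdelta nu delta theta lambda - delta * hstar nu (delta * theta) lambda)
        <= C * Rpower delta (2 * nu).
Proof.
  assert (Hc : 0 < Cnu nu) by (apply Cnu_pos; lra).
  set (L0 := Cnu nu * Rpower thl (2 * nu) * Rpower (thu ^ 2 + PI ^ 2) (- (nu + /2))).
  set (B := Cnu nu * Rpower thu (2 * nu)).
  assert (HL0 : 0 < L0) by (unfold L0; apply Rmult_lt_0_compat; [apply Rmult_lt_0_compat; [exact Hc| apply Rpower_pos]| apply Rpower_pos]).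
  assert (HB : 0 < B) by (unfold B; apply Rmult_lt_0_compat; [exact Hc| apply Rpower_pos]).
  assert (Hq : 0 <= (2 * nu + 1) / thl) by (apply Rlt_le, Rdiv_lt_0_compat; lra).
  exists (/ L0 + B * (1 + (2 * nu + 1) / thl)).
  assert (HiL : 0 < / L0) by (apply Rinv_0_lt_compat; lra).
  assert (HBq : 0 <= B * ((2 * nu + 1) / thl)) by (apply Rmult_le_pos; lra).
  split; [nra|].
  intros d t lam Hd Hd1 Ht1 Ht2 Hl1 Hl2.
  assert (Ht : 0 < t) by lra.
  destruct (key nu d lam t Hnu Hc ltac:(lra) Hd Ht) as [K1 [K2 K3]].
  set (C := / L0 + B * (1 + (2 * nu + 1) / thl)) in *.
  assert (Hdt : 0 < d * t) by (apply Rmult_lt_0_compat; lra).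
  assert (HRd : 0 < Rpower d (2 * nu)) by apply Rpower_pos.
  assert (HKd : Cnu nu * Rpower (d * t) (2 * nu) <= B * Rpower d (2 * nu)).
  { rewrite <- Rpower_mult_distr by lra. unfold B.
    rewrite (Rmult_comm (Rpower d _)), <- Rmult_assoc. apply Rmult_le_compat_r; [lra|].
    apply Rmult_le_compat_l; [lra|]. apply Rle_Rpower_l; lra. }
  split; [|split; [exact K1|split]].
  -
    apply Rle_trans with (L0 * Rpower d (2 * nu)).
    + apply Rmult_le_compat_r; [lra|]. rewrite <- (Rinv_inv L0). apply Rinv_le_contravar; [exact HiL|].
      unfold C. nra.
    + unfold gstar, L0. rewrite <- Rpower_mult_distr by lra.
      replace (Cnu nu * Rpower thl (2 * nu) * Rpower (thu ^ 2 + PI ^ 2) (- (nu + / 2)) * Rpower d (2 * nu))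
        with (Cnu nu * (Rpower d (2 * nu) * Rpower thl (2 * nu)) * Rpower (thu ^ 2 + PI ^ 2) (- (nu + / 2))) by ring.
      apply Rmult_le_compat.
      * apply Rmult_le_pos; [lra|]. apply Rmult_le_pos; left; apply Rpower_pos.
      * left; apply Rpower_pos.
      * apply Rmult_le_compat_l; [lra|]. apply Rmult_le_compat_l; [lra|]. apply Rle_Rpower_l; lra.
      * unfold Rpower. apply exp_le_mono. apply Ropp_le_cancel. rewrite !Ropp_mult_distr_l, !Ropp_involutive.
        apply Rmult_le_compat_l; [lra|]. apply ln_le_mono.
        { pose proof (pow2_ge_0 lam). assert (0 < (d * t) ^ 2) by (apply pow_lt; lra). lra. }
        assert ((d * t) ^ 2 <= thu ^ 2).
        { apply pow_incr. split; [lra|]. apply Rle_trans with t; [|lra]. rewrite <- (Rmult_1_l t) at 2.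
          apply Rmult_le_compat_r; lra. }
        assert (lam ^ 2 <= PI ^ 2) by (simpl; nra). lra.
  - assert (B * Rpower d (2 * nu) <= C * Rpower d (2 * nu)) by (apply Rmult_le_compat_r; [lra|unfold C; nra]). lra.
  - eapply Rle_trans; [exact K3|].
    apply Rle_trans with ((2 * nu + 1) / thl * (B * Rpower d (2 * nu))).
    + apply Rmult_le_compat.
      * apply Rlt_le, Rdiv_lt_0_compat; lra.
      * apply Rmult_le_pos; [lra| left; apply Rpower_pos].
      * unfold Rdiv. apply Rmult_le_compat_l; [lra|]. apply Rinv_le_contravar; lra.
      * exact HKd.
    + unfold C. nra.
Qed.
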